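(* Let $k$ be a field of characteristic $0$ containing a primitive fifth root of unity $\zeta$. For $\underline{a}=(a_1,\ldots,a_7)\in k^7$ let $X_{\underline{a}}\subset\mathbb{P}^4$ be defined by $$a_1x_0^3 + a_2x_0x_1x_4 + a_3x_0x_2x_3 + a_4x_1^2x_3 + a_5x_1x_2^2 + a_6x_2x_4^2+a_7x_3^2x_4=0,$$ and assume $X_{\underline{a}}$ is a smooth cubic threefold and that $a_2\neq 0$ or $a_3\neq0$. Then there is a change of coordinates in $\mathbb{P}^4_{\bar k}$ such that $X_{\underline a}$ is isomorphic to $$X_{a,b}:\quad F_{a,b}:=xu^2+2yuv+zv^2+2z^2u+2x^2v+ay^3+bxyz=0$$ for some $a,b\in\bar k$, where $(u:v:x:y:z)$ are homogeneous coordinates on $\mathbb{P}^4$. Moreover, $X_{a,b}$ is smooth if and only if $$D(a,b):=a\,\Delta(a,b)\neq 0,\qquad \Delta(a,b):=512 a^2 + 27 a^3 + 48 a^2 b + 128 a b^2 + 6 a^2 b^2 + 30 a b^3+ a^2 b^3 + 8 b^4 + 2 a b^4 + b^5 .$$ The threefold $X_{a,b}$ has the automorphisms $$\alpha_X(u:v:x:y:z)=(\zeta^2u:\zeta^3v:\zeta x:y:\zeta^4z),\qquad \iota_X(u:v:x:y:z)=(v:u:z:y:x)$$ of order five and two respectively, and they generate a dihedral subgroup $D_5$ of order $10$ of $\mathrm{Aut}(X_{a,b})$. *)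

(* Defs.v *)
From HB Require Import structures.
From mathcomp Require Import all_boot all_order all_algebra.
From mathcomp Require Import mpoly.
Set Implicit Arguments. Unset Strict Implicit. Unset Printing Implicit Defensive.
Import Order.TTheory GRing.Theory Num.Theory.
Local Open Scope ring_scope.

(* Coordinates on P^4 are indexed by 'I_5.  For X_a they are x_0..x_4;
   for X_{a,b} they are (u:v:x:y:z) = (0:1:2:3:4). *)

Definition Fa (R : nzRingType) (a1 a2 a3 a4 a5 a6 a7 : R) : {mpoly R[5]} :=
  a1 *: ('X_0 ^+ 3)
  + a2 *: ('X_0 * 'X_1 * 'X_4)
  + a3 *: ('X_0 * 'X_2 * 'X_3)
  + a4 *: ('X_1 ^+ 2 * 'X_3)
  + a5 *: ('X_1 * 'X_2 ^+ 2)
  + a6 *: ('X_2 * 'X_4 ^+ 2)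
  + a7 *: ('X_3 ^+ 2 * 'X_4).

Definition Fab (R : nzRingType) (a b : R) : {mpoly R[5]} :=
  'X_2 * 'X_0 ^+ 2
  + ('X_3 * 'X_0 * 'X_1) *+ 2
  + 'X_4 * 'X_1 ^+ 2
  + ('X_4 ^+ 2 * 'X_0) *+ 2
  + ('X_2 ^+ 2 * 'X_1) *+ 2
  + a *: ('X_3 ^+ 3)
  + b *: ('X_2 * 'X_3 * 'X_4).

Definition Delta (R : nzRingType) (a b : R) : R :=
  512%:R * a ^+ 2 + 27%:R * a ^+ 3 + 48%:R * a ^+ 2 * b + 128%:R * a * b ^+ 2
  + 6%:R * a ^+ 2 * b ^+ 2 + 30%:R * a * b ^+ 3 + a ^+ 2 * b ^+ 3
  + 8%:R * b ^+ 4 + 2%:R * a * b ^+ 4 + b ^+ 5.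

Definition Dab (R : nzRingType) (a b : R) : R := a * Delta a b.

(* Over an algebraically closed field L, the hypersurface
   {F = 0} is smooth iff it has no singular point. (For F = 0 every point is
   singular, so smoothness also forces F <> 0.) *)
Definition smooth_hypersurface (L : nzRingType) (F : {mpoly L[5]}) : Prop :=
  forall x : 'I_5 -> L,
    F.@[x] = 0 -> (forall i : 'I_5, (F^`M(i)).@[x] = 0) -> forall i, x i = 0.

Definition lin (L : nzRingType) (M : 'M[L]_5) (x : 'I_5 -> L) : 'I_5 -> L :=
  fun i => \sum_(j < 5) M i j * x j.

(* Equality in PGL_5 : the matrices differ by a nonzero scalar. *)
Definition pequiv (L : nzRingType) (M N : 'M[L]_5) : Prop :=
  exists c : L, c != 0 /\ M = c *: N.

Definition is_aut_of (L : comUnitRingType) (F : {mpoly L[5]}) (A : 'M[L]_5)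
  : Prop :=
  A \in unitmx /\ forall x : 'I_5 -> L, F.@[lin A x] = 0 <-> F.@[x] = 0.

Definition alphaM (L : nzRingType) (zeta : L) : 'M[L]_5 :=
  diag_mx (\row_(i < 5) nth 0 [:: zeta ^+ 2; zeta ^+ 3; zeta; 1; zeta ^+ 4] i).

(* iota_X (u:v:x:y:z) = (v:u:z:y:x): coordinate i of the image is
   coordinate (iota_idx i) of the argument. *)
Definition iota_idx (i : 'I_5) : nat := nth 0%N [:: 1%N; 0%N; 4%N; 3%N; 2%N] i.

Definition iotaM (L : nzRingType) : 'M[L]_5 :=
  \matrix_(i < 5, j < 5) (j == iota_idx i :> nat)%:R.

(* Main.v *)
Require Import Defs.
From HB Require Import structures.
From mathcomp Require Import all_boot all_order all_algebra.
From mathcomp Require Import mpoly.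
From mathcomp Require Import ring.
Import Order.TTheory GRing.Theory Num.Theory.
Local Open Scope ring_scope.
Set Implicit Arguments. Unset Strict Implicit. Unset Printing Implicit Defensive.

Lemma mderivXU (R : comNzRingType) (i j : 'I_5) :
  ('X_j : {mpoly R[5]})^`M(i) = (j == i)%:R.
Proof.
rewrite mderivX mnm1E; case: eqP => [->|_]; last by rewrite scale0r.
have ->: (U_(i) - U_(i))%MM = 0%MM by apply/mnmP => k; rewrite mnmBE subnn mnm0E.
by rewrite mpolyX0 scale1r.
Qed.

Ltac evd := rewrite ?(expr2, exprS) ?(mderivD, mderivMn, mderivZ, mderivM, mderivXU);
  rewrite ?(mevalD, mevalMn, mevalZ, mevalM, mevalXU) /= ?rmorph_nat; ring.

Section Ev.
Variable R : comNzRingType.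
Variables (a b : R) (x : 'I_5 -> R).

Lemma Fab_v : (Fab a b).@[x] = x 2 * x 0 ^+ 2 + (x 3 * x 0 * x 1) *+ 2 + x 4 * x 1 ^+ 2
  + (x 4 ^+ 2 * x 0) *+ 2 + (x 2 ^+ 2 * x 1) *+ 2 + a * x 3 ^+ 3 + b * (x 2 * x 3 * x 4).
Proof. rewrite /Fab; evd. Qed.
Lemma Fab_d0 : ((Fab a b)^`M(0)).@[x] = (x 2 * x 0 + x 3 * x 1 + x 4 ^+ 2) *+ 2.
Proof. rewrite /Fab; evd. Qed.
Lemma Fab_d1 : ((Fab a b)^`M(1)).@[x] = (x 3 * x 0 + x 4 * x 1 + x 2 ^+ 2) *+ 2.
Proof. rewrite /Fab; evd. Qed.
Lemma Fab_d2 : ((Fab a b)^`M(2)).@[x] = x 0 ^+ 2 + 4%:R * x 2 * x 1 + b * x 3 * x 4.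
Proof. rewrite /Fab; evd. Qed.
Lemma Fab_d3 : ((Fab a b)^`M(3)).@[x] = 2%:R * x 0 * x 1 + 3%:R * a * x 3 ^+ 2 + b * x 2 * x 4.
Proof. rewrite /Fab; evd. Qed.
Lemma Fab_d4 : ((Fab a b)^`M(4)).@[x] = x 1 ^+ 2 + 4%:R * x 4 * x 0 + b * x 2 * x 3.
Proof. rewrite /Fab; evd. Qed.

Variables a1 a2 a3 a4 a5 a6 a7 : R.
Lemma Fa_v : (Fa a1 a2 a3 a4 a5 a6 a7).@[x] = a1 * x 0 ^+ 3 + a2 * (x 0 * x 1 * x 4)
  + a3 * (x 0 * x 2 * x 3) + a4 * (x 1 ^+ 2 * x 3) + a5 * (x 1 * x 2 ^+ 2)
  + a6 * (x 2 * x 4 ^+ 2) + a7 * (x 3 ^+ 2 * x 4).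
Proof. rewrite /Fa; evd. Qed.
Lemma Fa_d0 : ((Fa a1 a2 a3 a4 a5 a6 a7)^`M(0)).@[x] =
  3%:R * a1 * x 0 ^+ 2 + a2 * x 1 * x 4 + a3 * x 2 * x 3.
Proof. rewrite /Fa; evd. Qed.
Lemma Fa_d1 : ((Fa a1 a2 a3 a4 a5 a6 a7)^`M(1)).@[x] =
  a2 * x 0 * x 4 + 2%:R * a4 * x 1 * x 3 + a5 * x 2 ^+ 2.
Proof. rewrite /Fa; evd. Qed.
Lemma Fa_d2 : ((Fa a1 a2 a3 a4 a5 a6 a7)^`M(2)).@[x] =
  a3 * x 0 * x 3 + 2%:R * a5 * x 1 * x 2 + a6 * x 4 ^+ 2.
Proof. rewrite /Fa; evd. Qed.
Lemma Fa_d3 : ((Fa a1 a2 a3 a4 a5 a6 a7)^`M(3)).@[x] =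
  a3 * x 0 * x 2 + a4 * x 1 ^+ 2 + 2%:R * a7 * x 3 * x 4.
Proof. rewrite /Fa; evd. Qed.
Lemma Fa_d4 : ((Fa a1 a2 a3 a4 a5 a6 a7)^`M(4)).@[x] =
  a2 * x 0 * x 1 + 2%:R * a6 * x 2 * x 4 + a7 * x 3 ^+ 2.
Proof. rewrite /Fa; evd. Qed.
End Ev.

Lemma map_Fa (k L : comNzRingType) (f : {rmorphism k -> L}) a1 a2 a3 a4 a5 a6 a7 :
  map_mpoly f (Fa a1 a2 a3 a4 a5 a6 a7) = Fa (f a1) (f a2) (f a3) (f a4) (f a5) (f a6) (f a7).
Proof. rewrite /Fa !rmorphD /= !map_mpolyZ !rmorphM /= ?rmorphXn /= !map_mpolyX //. Qed.

Lemma ord5 (i : 'I_5) : i = 0 \/ i = 1 \/ i = 2 \/ i = 3 \/ i = 4.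
Proof.
case: i => [[|[|[|[|[|m]]]]] hm].
- by left; apply: val_inj.
- by right; left; apply: val_inj.
- by right; right; left; apply: val_inj.
- by right; right; right; left; apply: val_inj.
- by right; right; right; right; apply: val_inj.
- by [].
Qed.


Section Core.
Variable L : fieldType.
Hypothesis n2 : (2%:R : L) != 0.
Hypothesis n3 : (3%:R : L) != 0.
Hypothesis n5 : (5%:R : L) != 0.

Definition Eqs (a b u v x z : L) := [/\ x*u + v + z^+2 = 0, u + z*v + x^+2 = 0,
  u^+2 + 4%:R*x*v + b*z = 0, v^+2 + 4%:R*z*u + b*x = 0 & 2%:R*u*v + 3%:R*a + b*x*z = 0].

Lemma core_sym a b u v t : Eqs a b u v t t -> a != 0 -> Delta a b = 0.
Proof.
case=> H1 H2 H3 H4 H5 a0.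
have e1 : (t - 1) * (u - v) = 0.
  have -> : (t - 1) * (u - v) = (t*u + v + t^+2) - (u + t*v + t^+2) by ring.
  by rewrite H1 H2 subrr.
have e2 : (u - v) * (u + v - 4%:R * t) = 0.
  have -> : (u - v) * (u + v - 4%:R * t) = (u^+2 + 4%:R*t*v + b*t) - (v^+2 + 4%:R*t*u + b*t) by ring.
  by rewrite H3 H4 subrr.
have huv : u = v.
  case: (eqVneq u v) => // neq; exfalso; move/eqP: n5; apply.
  have uv : u - v != 0 by rewrite subr_eq0.
  move/eqP: e1; rewrite mulf_eq0 (negbTE uv) orbF subr_eq0 => /eqP t1.
  move/eqP: e2; rewrite mulf_eq0 (negbTE uv) /= subr_eq0 => /eqP e2.
  rewrite t1 in H1 e2.
  have -> : (5%:R : L) = (1*u + v + 1^+2) - (u + v) + 4%:R * 1 by ring.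
  by rewrite H1 e2; ring.
rewrite -huv in H1 H3 H5.
have t1 : t + 1 != 0.
  apply/eqP => t1; have tm : t = -1 by apply/eqP; rewrite -subr_eq0 opprK t1.
  rewrite tm in H1; have : (1:L) = 0 by rewrite -H1; ring.
  by move/eqP; rewrite oner_eq0.
have t0 : t != 0.
  apply/eqP => t0; rewrite t0 in H1 H5.
  have u0 : u = 0 by rewrite -H1; ring.
  have : 3%:R * a = 0 by rewrite -H5 u0; ring.
  by move/eqP; rewrite mulf_eq0 (negbTE n3) (negbTE a0).
have hu : u = - t^+2 / (t + 1).
  by apply: (mulIf t1); rewrite divfK //; apply/eqP; rewrite -subr_eq0; apply/eqP; rewrite -H1; ring.
have hb : b = - (u^+2 + 4%:R*t*u) / t.
  by apply: (mulIf t0); rewrite divfK //; apply/eqP; rewrite -subr_eq0; apply/eqP; rewrite -H3; ring.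
have ha : a = - (2%:R*u*u + b*t*t) / 3%:R.
  by apply: (mulIf n3); rewrite divfK //; apply/eqP; rewrite -subr_eq0; apply/eqP; rewrite -H5; ring.
rewrite ha hb hu /Delta.
field; rewrite ?t0 ?t1 ?n3 //.
Qed.

Lemma core1 a b u v x z : Eqs a b u v x z -> a != 0 -> Delta a b = 0.
Proof.
case=> H1 H2 H3 H4 H5 a0.
have hu : u * (x*z - 1) = x^+2 - z^+3.
  apply/eqP; rewrite -subr_eq0; apply/eqP.
  have -> : u * (x*z - 1) - (x^+2 - z^+3) = z * (x*u + v + z^+2) - (u + z*v + x^+2) by ring.
  by rewrite H1 H2; ring.
have hv : v * (x*z - 1) = z^+2 - x^+3.
  apply/eqP; rewrite -subr_eq0; apply/eqP.
  have -> : v * (x*z - 1) - (z^+2 - x^+3) = x * (u + z*v + x^+2) - (x*u + v + z^+2) by ring.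
  by rewrite H1 H2; ring.
have x5 : x^+5 = z^+5.
  case: (eqVneq (x*z) 1) => [xz1|xz1].
    rewrite xz1 subrr mulr0 in hu; rewrite xz1 subrr mulr0 in hv.
    have e1 : x^+2 = z^+3 by apply/eqP; rewrite -subr_eq0 -hu.
    have e2 : z^+2 = x^+3 by apply/eqP; rewrite -subr_eq0 -hv.
    have -> : x^+5 = x^+2 * x^+3 by rewrite -exprD.
    have -> : z^+5 = z^+3 * z^+2 by rewrite -exprD.
    by rewrite e1 e2.
  have d0 : x*z - 1 != 0 by rewrite subr_eq0.
  have G : x * u^+2 + 4%:R * x^+2 * v - z * v^+2 - 4%:R * z^+2 * u = 0.
    have -> : x * u^+2 + 4%:R * x^+2 * v - z * v^+2 - 4%:R * z^+2 * u =
       x * (u^+2 + 4%:R*x*v + b*z) - z * (v^+2 + 4%:R*z*u + b*x) by ring.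
    by rewrite H3 H4; ring.
  have : (x*z-1)^+2 * (x * u^+2 + 4%:R * x^+2 * v - z * v^+2 - 4%:R * z^+2 * u)
        = - 5%:R * (x^+5 - z^+5) * (x*z - 1).
    have -> : (x*z-1)^+2 * (x * u^+2 + 4%:R * x^+2 * v - z * v^+2 - 4%:R * z^+2 * u)
      = x * (u*(x*z-1))^+2 + 4%:R * x^+2 * (v * (x*z-1)) * (x*z-1)
        - z * (v*(x*z-1))^+2 - 4%:R * z^+2 * (u*(x*z-1)) * (x*z-1) by ring.
    rewrite hu hv; ring.
  rewrite G mulr0 => /esym/eqP; rewrite !mulf_eq0 oppr_eq0 (negbTE n5) (negbTE d0) /=.
  by rewrite orbF subr_eq0 => /eqP.
have x0 : x != 0.
  apply/eqP => x0; rewrite x0 in H1 H2 H5 x5.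
  have z0 : z = 0.
    have : z^+5 == 0 by rewrite -x5 expr0n.
    by rewrite expf_eq0 => /andP [_ /eqP].
  rewrite z0 in H1 H2 H5.
  have u0 : u = 0 by rewrite -H2; ring.
  have v0 : v = 0 by rewrite -H1; ring.
  have : 3%:R * a = 0 by rewrite -H5 u0 v0; ring.
  by move/eqP; rewrite mulf_eq0 (negbTE n3) (negbTE a0).
pose l := (z / x)^+3.
have l5 : l^+5 = 1.
  rewrite /l -exprM mulnC exprM expr_div_n -x5 divff //.
  by rewrite expr1n.
  by rewrite expf_eq0.
have l2 : z = l^+2 * x.
  rewrite /l -exprM (_ : (3*2 = 5 + 1)%N) // exprD expr_div_n -x5 divff ?expf_eq0 //.
  by rewrite mul1r expr1 divfK.
rewrite l2 in H1 H2 H3 H4 H5.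
apply: (@core_sym a b (l^+2 * u) (l^+3 * v) (l * x)) => //; split.
- have -> : l * x * (l ^+ 2 * u) + l ^+ 3 * v + (l * x) ^+ 2 =
    l^+3 * (x * u + v + (l ^+ 2 * x) ^+ 2) + (1 - l^+5) * (l^+2 * x^+2) by ring.
  by rewrite H1 l5; ring.
- have -> : l ^+ 2 * u + l * x * (l ^+ 3 * v) + (l * x) ^+ 2 =
    l^+2 * (u + l ^+ 2 * x * v + x ^+ 2) by ring.
  by rewrite H2; ring.
- have -> : (l ^+ 2 * u) ^+ 2 + 4%:R * (l * x) * (l ^+ 3 * v) + b * (l * x) =
    l^+4 * (u ^+ 2 + 4%:R * x * v + b * (l ^+ 2 * x)) + (1 - l^+5) * (b * l * x) by ring.
  by rewrite H3 l5; ring.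
- have -> : (l ^+ 3 * v) ^+ 2 + 4%:R * (l * x) * (l ^+ 2 * u) + b * (l * x) =
    l * (v ^+ 2 + 4%:R * (l ^+ 2 * x) * u + b * x) + (l^+5 - 1) * (l * v^+2) by ring.
  by rewrite H4 l5; ring.
- have -> : 2%:R * (l ^+ 2 * u) * (l ^+ 3 * v) + 3%:R * a + b * (l * x) * (l * x) =
    (2%:R * u * v + 3%:R * a + b * x * (l ^+ 2 * x)) + (l^+5 - 1) * (2%:R * u * v) by ring.
  by rewrite H5 l5; ring.
Qed.

Lemma sing_hom (a b u v x y z : L) :
  x*u + y*v + z^+2 = 0 -> y*u + z*v + x^+2 = 0 ->
  u^+2 + 4%:R*x*v + b*y*z = 0 -> 2%:R*u*v + 3%:R*a*y^+2 + b*x*z = 0 ->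
  v^+2 + 4%:R*z*u + b*x*y = 0 ->
  a * Delta a b != 0 -> [/\ u = 0, v = 0, x = 0, y = 0 & z = 0].
Proof.
move=> E0 E1 E2 E3 E4 D0.
have [a0 d0] : a != 0 /\ Delta a b != 0.
  by move: D0; rewrite mulf_eq0 negb_or => /andP.
case: (eqVneq y 0) => [y0|y0].
  rewrite y0 in E0 E1 E2 E3 E4.
  have A : x*u + z^+2 = 0 by rewrite -E0; ring.
  have B : z*v + x^+2 = 0 by rewrite -E1; ring.
  have C : u^+2 + 4%:R*x*v = 0 by rewrite -E2; ring.
  have D : v^+2 + 4%:R*z*u = 0 by rewrite -E4; ring.
  have h1 : z^+5 - 4%:R * x^+5 = 0.
    have -> : z^+5 - 4%:R * x^+5 = z * x^+2 * (u^+2 + 4%:R*x*v) - z*(x*u - z^+2)*(x*u + z^+2)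
       - 4%:R * x^+3 * (z*v + x^+2) by ring.
    by rewrite A B C; ring.
  have h2 : x^+5 - 4%:R * z^+5 = 0.
    have -> : x^+5 - 4%:R * z^+5 = x * z^+2 * (v^+2 + 4%:R*z*u) - x*(z*v - x^+2)*(z*v + x^+2)
       - 4%:R * z^+3 * (x*u + z^+2) by ring.
    by rewrite A B D; ring.
  have x0 : x = 0.
    have : (3%:R * 5%:R) * x^+5 == 0.
      have -> : (3%:R * 5%:R) * x^+5 = - (x^+5 - 4%:R * z^+5) - 4%:R * (z^+5 - 4%:R * x^+5) :> L by ring.
      by rewrite h1 h2; rewrite oppr0 mulr0 subr0.
    by rewrite !mulf_eq0 (negbTE n3) (negbTE n5) /= !orbb => /eqP.
  have z0 : z = 0.
    have : z^+5 == 0 by rewrite -h1 x0; apply/eqP; ring.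
    by rewrite expf_eq0 => /andP [_ /eqP].
  rewrite x0 z0 in C D.
  have u0 : u = 0.
    have : u^+2 == 0 by rewrite -C; apply/eqP; ring.
    by rewrite expf_eq0 => /andP [_ /eqP].
  have v0 : v = 0.
    have : v^+2 == 0 by rewrite -D; apply/eqP; ring.
    by rewrite expf_eq0 => /andP [_ /eqP].
  by [].
exfalso; move/eqP: d0; apply.
apply: (@core1 a b (u/y) (v/y) (x/y) (z/y)) => //; split.
- have -> : x / y * (u / y) + v / y + (z / y) ^+ 2 = (x*u + y*v + z^+2) / y^+2 by field.
  by rewrite E0 mul0r.
- have -> : u / y + z / y * (v / y) + (x / y) ^+ 2 = (y*u + z*v + x^+2) / y^+2 by field.
  by rewrite E1 mul0r.
- have -> : (u / y) ^+ 2 + 4%:R * (x / y) * (v / y) + b * (z / y) = (u^+2 + 4%:R*x*v + b*y*z) / y^+2 by field.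
  by rewrite E2 mul0r.
- have -> : (v / y) ^+ 2 + 4%:R * (z / y) * (u / y) + b * (x / y) = (v^+2 + 4%:R*z*u + b*x*y) / y^+2 by field.
  by rewrite E4 mul0r.
- have -> : 2%:R * (u / y) * (v / y) + 3%:R * a + b * (x / y) * (z / y) = (2%:R*u*v + 3%:R*a*y^+2 + b*x*z) / y^+2 by field.
  by rewrite E3 mul0r.
Qed.
End Core.


Section Closed.
Variable L : closedFieldType.

Lemma root_monic2 (p q : L) : exists t, t^+2 + p*t + q = 0.
Proof.
have [x hx] := @GRing.solve_monicpoly L 2 (nth 0 [:: -q; -p]) isT.
exists x; move: hx; rewrite !big_ord_recr big_ord0 /= add0r expr0 expr1 mulr1 => ->.
ring.
Qed.

Lemma root_monic3 (p q r : L) : exists t, t^+3 + p*t^+2 + q*t + r = 0.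
Proof.
have [x hx] := @GRing.solve_monicpoly L 3 (nth 0 [:: -r; -q; -p]) isT.
exists x; move: hx; rewrite !big_ord_recr big_ord0 /= add0r expr0 expr1 mulr1 => ->.
ring.
Qed.

Lemma root_pow5 (K : L) : exists c, c^+5 = K.
Proof.
have [x hx] := @GRing.solve_monicpoly L 5 (nth 0 [:: K]) isT.
exists x; move: hx; rewrite !big_ord_recr big_ord0 /= add0r expr0 mulr1 => ->.
ring.
Qed.

Lemma cubic_vieta (p q r : L) : exists t1 t2 t3,
  [/\ t1 + t2 + t3 = - p, t1*t2 + t1*t3 + t2*t3 = q & t1*t2*t3 = - r].
Proof.
have [t1 h1] := root_monic3 p q r.
have [t2 h2] := root_monic2 (p + t1) (q + t1 * (p + t1)).
exists t1, t2, (- (p + t1) - t2); split.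
- ring.
- apply/eqP; rewrite -subr_eq0; apply/eqP.
  have -> : t1 * t2 + t1 * (- (p + t1) - t2) + t2 * (- (p + t1) - t2) - q =
    - (t2^+2 + (p + t1) * t2 + (q + t1 * (p + t1))) by ring.
  by rewrite h2 oppr0.
- apply/eqP; rewrite -subr_eq0; apply/eqP.
  have -> : t1 * t2 * (- (p + t1) - t2) - - r =
    - t1 * (t2^+2 + (p + t1) * t2 + (q + t1 * (p + t1))) + (t1^+3 + p*t1^+2 + q*t1 + r) by ring.
  by rewrite h1 h2; ring.
Qed.

Definition P1 (b t : L) := t^+2 * (3%:R * t + 4%:R) - b * (1 + t)^+2.
Definition P2 (a t : L) := t^+4 * (t + 2%:R) + a * (1 + t)^+2.
Definition G6 (e1 e2 e3 c0 c1 c2 : L) := c0^+3 + e3*c1^+3 - 3%:R*e3*c0*c1*c2 + e3^+2*c2^+3 + e2*c0*c1^+2 - 2%:R*e2*c0^+2*c2 + e2*e3*c1*c2^+2 + e2^+2*c0*c2^+2 + e1*c0^+2*c1 + e1*e3*c1^+2*c2 - 2%:R*e1*e3*c0*c2^+2 + e1*e2*c0*c1*c2 + e1^+2*c0^+2*c2.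

Lemma exists_t (a b : L) : (3%:R : L) != 0 -> Delta a b = 0 ->
  exists t, P1 b t = 0 /\ P2 a t = 0.
Proof.
move=> n3 D0.
have [t1 [t2 [t3 [V1 V2 V3]]]] :=
  cubic_vieta ((4%:R - b) / 3%:R) (- (2%:R * b) / 3%:R) (- b / 3%:R).
have P1f : forall s, P1 b s = 3%:R * ((s - t1) * (s - t2) * (s - t3)).
  move=> s.
  have -> : 3%:R * ((s - t1) * (s - t2) * (s - t3)) = 3%:R * (s^+3 - (t1 + t2 + t3) * s^+2
     + (t1*t2 + t1*t3 + t2*t3) * s - t1*t2*t3) by ring.
  by rewrite V1 V2 V3 /P1; field.
pose c2 := 27%:R*a + 32%:R - 3%:R*b + 6%:R*b^+2 + b^+3.
pose c1 := 54%:R*a - 10%:R*b + 11%:R*b^+2 + 2%:R*b^+3.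
pose c0 := 27%:R*a - 8%:R*b + 4%:R*b^+2 + b^+3.
have Rf : forall s, 27%:R * P2 a s =
    (9%:R * s^+2 + (6%:R + 3%:R*b) * s + (b^+2 + 4%:R*b - 8%:R)) * P1 b s + (c2 * s^+2 + c1 * s + c0).
  by move=> s; rewrite /P1 /P2 /c2 /c1 /c0; ring.
have prodR : (c2 * t1^+2 + c1 * t1 + c0) * (c2 * t2^+2 + c1 * t2 + c0) * (c2 * t3^+2 + c1 * t3 + c0)
    = 81%:R * Delta a b.
  have -> : (c2 * t1^+2 + c1 * t1 + c0) * (c2 * t2^+2 + c1 * t2 + c0) * (c2 * t3^+2 + c1 * t3 + c0)
    = G6 (t1 + t2 + t3) (t1*t2 + t1*t3 + t2*t3) (t1*t2*t3) c0 c1 c2 by rewrite /G6; ring.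
  by rewrite V1 V2 V3 /G6 /c0 /c1 /c2 /Delta; field.
have n27 : (27%:R : L) != 0.
  by rewrite (_ : 27 = 3 * 3 * 3)%N // !natrM !mulf_neq0.
have fin : forall s, s = t1 \/ s = t2 \/ s = t3 -> c2 * s^+2 + c1 * s + c0 = 0 ->
    P1 b s = 0 /\ P2 a s = 0.
  move=> s hs hR; have p1 : P1 b s = 0.
    by rewrite P1f; case: hs => [->|[->|->]]; ring.
  split => //; apply: (mulfI n27); rewrite Rf p1 hR; ring.
move: prodR; rewrite D0 mulr0 => /eqP; rewrite !mulf_eq0 -!orbA.
case/or3P => /eqP h.
- by exists t1; apply: fin => //; left.
- by exists t2; apply: fin => //; right; left.
- by exists t3; apply: fin => //; right; right.
Qed.
End Closed.


Definition pt (R : nzRingType) (u v x y z : R) : 'I_5 -> R := fun i => nth 0 [:: u; v; x; y; z] i.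
Arguments pt {R}.

Section PtE.
Variables (R : nzRingType) (u v x y z : R).
Lemma pt0 : pt u v x y z 0 = u. Proof. by []. Qed.
Lemma pt1 : pt u v x y z 1 = v. Proof. by []. Qed.
Lemma pt2 : pt u v x y z 2 = x. Proof. by []. Qed.
Lemma pt3 : pt u v x y z 3 = y. Proof. by []. Qed.
Lemma pt4 : pt u v x y z 4 = z. Proof. by []. Qed.
End PtE.
Definition ptE := (pt0, pt1, pt2, pt3, pt4).

Lemma Fab_euler (R : comNzRingType) (a b : R) x :
  3%:R * (Fab a b).@[x] = x 0 * ((Fab a b)^`M(0)).@[x] + x 1 * ((Fab a b)^`M(1)).@[x]
   + x 2 * ((Fab a b)^`M(2)).@[x] + x 3 * ((Fab a b)^`M(3)).@[x] + x 4 * ((Fab a b)^`M(4)).@[x].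
Proof. rewrite Fab_v Fab_d0 Fab_d1 Fab_d2 Fab_d3 Fab_d4; ring. Qed.

Lemma not_smooth (L : fieldType) (a b : L) (u v x y z : L) : (3%:R : L) != 0 ->
  ((Fab a b)^`M(0)).@[pt u v x y z] = 0 ->
  ((Fab a b)^`M(1)).@[pt u v x y z] = 0 ->
  ((Fab a b)^`M(2)).@[pt u v x y z] = 0 ->
  ((Fab a b)^`M(3)).@[pt u v x y z] = 0 ->
  ((Fab a b)^`M(4)).@[pt u v x y z] = 0 -> y != 0 -> ~ smooth_hypersurface (Fab a b).
Proof.
move=> n3 h0 h1 h2 h3 h4 y0 sm.
have := sm (pt u v x y z) _ _ 3; rewrite pt3.
have F0 : (Fab a b).@[pt u v x y z] = 0.
  apply: (mulfI n3); rewrite Fab_euler h0 h1 h2 h3 h4; ring.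
move/(_ F0) => H; move/eqP: y0; apply; apply: H.
by move=> i; case: (ord5 i) => [->|[->|[->|[->|->]]]].
Qed.

Lemma smooth_iff (L : closedFieldType) (a b : L) : (2%:R : L) != 0 -> (3%:R : L) != 0 ->
  (5%:R : L) != 0 -> smooth_hypersurface (Fab a b) <-> Dab a b != 0.
Proof.
move=> n2 n3 n5; split.
  move=> sm; apply/negP => /eqP; rewrite /Dab => /eqP; rewrite mulf_eq0 => /orP [/eqP a0|/eqP D0].
    apply: (@not_smooth L a b 0 0 0 1 0) => //; last by rewrite oner_eq0.
    - by rewrite Fab_d0 !ptE; ring.
    - by rewrite Fab_d1 !ptE; ring.
    - by rewrite Fab_d2 !ptE; ring.
    - by rewrite Fab_d3 !ptE a0; ring.
    - by rewrite Fab_d4 !ptE; ring.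
  have [t [p1 p2]] := exists_t n3 D0.
  have t1 : 1 + t != 0.
    apply/eqP => t1; move: p1; rewrite /P1 t1.
    have -> : t = -1 by apply/eqP; rewrite -subr_eq0 opprK addrC t1.
    move/eqP; apply/negP.
    have -> : (-1) ^+ 2 * (3%:R * -1 + 4%:R) - b * 0 ^+ 2 = 1 :> L by ring.
    by rewrite oner_eq0.
  pose w := - t^+2 / (1 + t).
  apply: (@not_smooth L a b w w t 1 t) => //; last by rewrite oner_eq0.
  - by rewrite Fab_d0 !ptE /w; field; rewrite t1.
  - by rewrite Fab_d1 !ptE /w; field; rewrite t1.
  - rewrite Fab_d2 !ptE /w.
    have -> : ((- t ^+ 2 / (1 + t)) ^+ 2 + 4%:R * t * (- t ^+ 2 / (1 + t)) + b * 1 * t) =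
        - t * P1 b t / (1 + t)^+2 by rewrite /P1; field; rewrite t1.
    by rewrite p1; ring.
  - rewrite Fab_d3 !ptE /w.
    have -> : 2%:R * (- t ^+ 2 / (1 + t)) * (- t ^+ 2 / (1 + t)) + 3%:R * a * 1 ^+ 2 + b * t * t =
        (3%:R * P2 a t - t^+2 * P1 b t) / (1 + t)^+2 by rewrite /P1 /P2; field; rewrite t1.
    by rewrite p1 p2; ring.
  - rewrite Fab_d4 !ptE /w.
    have -> : ((- t ^+ 2 / (1 + t)) ^+ 2 + 4%:R * t * (- t ^+ 2 / (1 + t)) + b * t * 1) =
        - t * P1 b t / (1 + t)^+2 by rewrite /P1; field; rewrite t1.
    by rewrite p1; ring.
move=> D x _ dF.
have s2 : forall y : L, y *+ 2 = 0 -> y = 0.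
  by move=> y /eqP; rewrite -mulr_natr mulf_eq0 (negbTE n2) orbF => /eqP.
have := dF 0; rewrite Fab_d0 => /s2 e0.
have := dF 1; rewrite Fab_d1 => /s2 e1.
have := dF 2; rewrite Fab_d2 => e2.
have := dF 3; rewrite Fab_d3 => e3.
have := dF 4; rewrite Fab_d4 => e4.
have [z0 z1 z2 z3 z4] := sing_hom n3 n5 e0 e1 e2 e3 e4 D.
by move=> i; case: (ord5 i) => [->|[->|[->|[->|->]]]].
Qed.


Lemma lin_one (R : comNzRingType) (M : 'M[R]_5) x i (j0 : 'I_5) c :
  (forall j, M i j = c *+ (j == j0)) -> lin M x i = c * x j0.
Proof.
move=> H; rewrite /lin (bigD1 j0) //= big1 ?addr0; first by rewrite H eqxx.
by move=> j /negbTE hj; rewrite H hj mulr0n mul0r.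
Qed.

Lemma row_one (R : comNzRingType) (M N : 'M[R]_5) i j (j0 : 'I_5) c :
  (forall k, M i k = c *+ (k == j0)) -> (M *m N) i j = c * N j0 j.
Proof.
move=> H; rewrite mxE (bigD1 j0) //= big1 ?addr0; first by rewrite H eqxx.
by move=> k /negbTE hk; rewrite H hk mulr0n mul0r.
Qed.

Definition iotaO (i : 'I_5) : 'I_5 := nth 0 [:: 1; 0; 4; 3; 2] i.

Lemma iotaO_val i : iota_idx i = iotaO i.
Proof. by case: (ord5 i) => [->|[->|[->|[->|->]]]]. Qed.

Lemma iotaOK i : iotaO (iotaO i) = i.
Proof. by case: (ord5 i) => [->|[->|[->|[->|->]]]]. Qed.

Lemma iotaE (R : comNzRingType) i k : iotaM R i k = 1 *+ (k == iotaO i).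
Proof. by rewrite mxE iotaO_val. Qed.

Section Alpha.
Variable R : comNzRingType.
Variable z : R.
Definition dA (i : 'I_5) : R := nth 0 [:: z^+2; z^+3; z; 1; z^+4] i.

Lemma alphaE i k : alphaM z i k = dA i *+ (k == i).
Proof. by rewrite mxE mxE eq_sym. Qed.

Lemma alphaXE m i k : (alphaM z ^+ m) i k = (dA i)^+m *+ (k == i).
Proof.
elim: m i k => [|m IH] i k.
  by rewrite expr0 mxE expr0 eq_sym.
rewrite exprS -mulmxE (row_one _ _ (alphaE i)) IH mulrnAr exprS.
done.
Qed.
End Alpha.

Section Aut.
Variable L : fieldType.
Variable z : L.
Hypothesis hz : 5.-primitive_root z.

Let z5 : z ^+ 5 = 1 := prim_expr_order hz.
Let z0 : z != 0.
Proof. by apply/eqP => z0; move: z5; rewrite z0 expr0n /= => /eqP; rewrite eq_sym oner_eq0. Qed.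

Let zpow k : z ^+ (5 * k) = 1.
Proof. by rewrite exprM z5 expr1n. Qed.

Lemma dA5 i : dA z i ^+ 5 = 1.
Proof.
by case: (ord5 i) => [->|[->|[->|[->|->]]]]; rewrite /dA /= ?expr1n // -exprM mulnC zpow.
Qed.

Lemma dAiota i : dA z (iotaO i) = dA z i ^+ 4.
Proof.
case: (ord5 i) => [->|[->|[->|[->|->]]]]; rewrite /dA /= ?expr1n // -exprM.
- by rewrite (_ : (2 * 4 = 5 * 1 + 3)%N) // exprD zpow mul1r.
- by rewrite (_ : (3 * 4 = 5 * 2 + 2)%N) // exprD zpow mul1r.
- by rewrite (_ : (4 * 4 = 5 * 3 + 1)%N) // exprD zpow mul1r expr1.
Qed.

Lemma A5 : alphaM z ^+ 5 = 1.
Proof. by apply/matrixP => i k; rewrite alphaXE dA5 mxE eq_sym. Qed.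

Lemma I2 : iotaM L * iotaM L = 1.
Proof.
apply/matrixP => i k; rewrite -mulmxE (row_one _ _ (iotaE L i)) iotaE iotaOK mul1r mxE.
by rewrite eq_sym.
Qed.

Lemma IA r k : (iotaM L *m alphaM z) r k = dA z (iotaO r) *+ (k == iotaO r).
Proof. by rewrite (row_one _ _ (iotaE L r)) alphaE mul1r. Qed.

Lemma IAI : iotaM L * alphaM z * iotaM L = alphaM z ^+ 4.
Proof.
apply/matrixP => r s; rewrite -!mulmxE (row_one _ _ (IA r)) iotaE iotaOK alphaXE.
by rewrite -dAiota mulr_natr.
Qed.

Lemma linA x i : lin (alphaM z) x i = dA z i * x i.
Proof. by apply: lin_one => j; rewrite alphaE. Qed.

Lemma linI x i : lin (iotaM L) x i = x (iotaO i).
Proof. by rewrite (@lin_one _ _ _ _ (iotaO i) 1) ?mul1r // => j; rewrite iotaE. Qed.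

Lemma FA a b x : (Fab a b).@[lin (alphaM z) x] = (Fab a b).@[x].
Proof.
rewrite !Fab_v !linA /dA /=.
apply/eqP; rewrite -subr_eq0; apply/eqP.
have z10 : z ^+ 10 = 1 by apply: (zpow 2).
set u := x 0; set v := x 1; set X := x 2; set y := x 3; set w := x 4.
have -> : z * X * (z ^+ 2 * u) ^+ 2 + (1 * y * (z ^+ 2 * u) * (z ^+ 3 * v)) *+ 2 +
   z ^+ 4 * w * (z ^+ 3 * v) ^+ 2 + ((z ^+ 4 * w) ^+ 2 * (z ^+ 2 * u)) *+ 2 +
   ((z * X) ^+ 2 * (z ^+ 3 * v)) *+ 2 + a * (1 * y) ^+ 3 + b * (z * X * (1 * y) * (z ^+ 4 * w)) -
   (X * u ^+ 2 + (y * u * v) *+ 2 + w * v ^+ 2 + (w ^+ 2 * u) *+ 2 + (X ^+ 2 * v) *+ 2 + a * y ^+ 3 +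
    b * (X * y * w)) =
   (z^+5 - 1) * (X * u ^+ 2 + (y * u * v) *+ 2 + (X ^+ 2 * v) *+ 2 + b * (X * y * w))
   + (z^+10 - 1) * (w * v ^+ 2 + (w ^+ 2 * u) *+ 2) by ring.
by rewrite z5 z10 subrr !mul0r addr0.
Qed.

Lemma FI a b x : (Fab a b).@[lin (iotaM L) x] = (Fab a b).@[x].
Proof. by rewrite !Fab_v !linI /iotaO /=; ring. Qed.


Lemma pequivE (M N : 'M[L]_5) c : M = c *: N -> forall r s, M r s = c * N r s.
Proof. by move=> -> r s; rewrite mxE. Qed.

Lemma AIE i j r s : (j < 2)%N ->
  (alphaM z ^+ i * iotaM L ^+ j) r s = dA z r ^+ i * (if j == 0%N then 1 *+ (s == r) else 1 *+ (s == iotaO r)).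
Proof.
case: j => [|[|//]] _ /=.
  by rewrite expr0 mulr1 alphaXE mulr_natr.
by rewrite expr1 -mulmxE (row_one _ _ (alphaXE z i r)) iotaE.
Qed.

Lemma aut_all (a b : L) :
  let A := alphaM z in let I := iotaM L in
  [/\ is_aut_of (Fab a b) A /\ is_aut_of (Fab a b) I,
      (pequiv (A ^+ 5) 1 /\ (forall m : nat, (0 < m < 5)%N -> ~ pequiv (A ^+ m) 1)),
      (pequiv (I ^+ 2) 1 /\ ~ pequiv I 1),
      pequiv (I * A * I) (A ^+ 4)
    & (forall (i1 i2 j1 j2 : nat), (i1 < 5)%N -> (i2 < 5)%N -> (j1 < 2)%N -> (j2 < 2)%N ->
        pequiv (A ^+ i1 * I ^+ j1) (A ^+ i2 * I ^+ j2) -> i1 = i2 /\ j1 = j2)].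
Proof.
move=> A I; split.
- split; split.
  + by case: (@mulmx1_unit _ _ A (A^+4)) => //; rewrite mulmxE -exprS A5.
  + by move=> x; rewrite FA.
  + by case: (@mulmx1_unit _ _ I I) => //; rewrite mulmxE I2.
  + by move=> x; rewrite FI.
- split.
    by exists 1; rewrite A5 scale1r oner_neq0.
  move=> m /andP [m0 m5] [c [c0 /pequivE E]].
  have e3 := E 3 3; have e2 := E 2 2.
  rewrite !alphaXE !mxE /dA /= in e3 e2.
  rewrite expr1n mulr1n mulr1 in e3; rewrite -e3 in e2. move: e2; rewrite /= mulr1 => e2.
  have := prim_order_dvd hz m; rewrite -(mulr1n (z^+m)) e2 eqxx => /(dvdn_leq m0).
  by rewrite leqNgt m5.
- split.
    by exists 1; rewrite expr2 I2 scale1r oner_neq0.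
  move=> [c [c0 /pequivE E]].
  have := E 0 1; rewrite iotaE mxE /=.
  by rewrite mulr0 => /eqP; rewrite oner_eq0.
- by exists 1; rewrite IAI scale1r oner_neq0.
- move=> i1 i2 j1 j2 hi1 hi2 hj1 hj2 [c [c0 /pequivE E]].
  have z2 : forall i, (z^+2)^+i != 0 by move=> i; rewrite !expf_neq0.
  case: j1 hj1 E => [|[|//]] hj1 E; case: j2 hj2 E => [|[|//]] hj2 E.
  + have := E 3 3; have := E 2 2; rewrite !AIE // /dA /=.
    rewrite !expr1n !mulr1 => e2 /esym c1; rewrite c1 mul1r in e2; split => //.
    by move/eqP: e2; rewrite (eq_prim_root_expr hz) !modn_small // => /eqP.
  + have := E 0 0; rewrite !AIE // /dA /=.
    by rewrite mulr0 mulr0 mulr1 => /eqP; rewrite (negbTE (z2 _)).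
  + have := E 0 0; rewrite !AIE // /dA /=.
    by rewrite mulr0 mulr1 => /esym/eqP; rewrite mulf_eq0 (negbTE c0) (negbTE (z2 _)).
  + have := E 3 3; have := E 2 4; rewrite !AIE // /dA /=.
    rewrite !expr1n !mulr1 => e2 /esym c1; rewrite c1 mul1r in e2; split => //.
    by move/eqP: e2; rewrite (eq_prim_root_expr hz) !modn_small // => /eqP.
Qed.
End Aut.


Lemma perm_scale_mx (L : fieldType) (sg : 'I_5 -> 'I_5) (s : 'I_5 -> L) :
  (forall i j, (sg i == sg j) = (i == j)) -> (forall i, s i != 0) ->
  (\matrix_(i, j) (s i *+ (j == sg i)) : 'M[L]_5) \in unitmx /\
  forall x i, lin (\matrix_(i, j) (s i *+ (j == sg i))) x i = s i * x (sg i).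
Proof.
move=> inj s0; split; last by move=> x i; apply: lin_one => j; rewrite mxE.
pose N : 'M[L]_5 := \matrix_(i, j) ((s j)^-1 *+ (i == sg j)).
have [] // := @mulmx1_unit L 5 (\matrix_(i, j) (s i *+ (j == sg i))) N; apply/matrixP => i j.
rewrite (@row_one _ _ _ _ _ (sg i) (s i)); last by move=> k; rewrite mxE.
rewrite !mxE inj; case: eqP => [->|_]; last by rewrite !mulr0n mulr0.
by rewrite !mulr1n divff.
Qed.

Ltac fld := field; rewrite ?[_ != 0]/(is_true _) ?eqxx /=;
  repeat match goal with H : is_true (_ != 0) |- _ => rewrite ?H; clear H end; rewrite ?andbT //.

Ltac nz := repeat first [ assumption | apply: mulf_neq0 | apply: expf_neq0 | rewrite invr_eq0 | exact: oner_neq0 ].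

Section Scal.
Variable L : closedFieldType.
Hypothesis n2 : (2%:R : L) != 0.

Definition fabE (a b u v X y w : L) := X * u ^+ 2 + (y * u * v) *+ 2 + w * v ^+ 2
  + (w ^+ 2 * u) *+ 2 + (X ^+ 2 * v) *+ 2 + a * y ^+ 3 + b * (X * y * w).

Lemma scal (B1 B2 B3 B4 C D1 D2 : L) : B1 != 0 -> B2 != 0 -> B3 != 0 -> B4 != 0 -> C != 0 ->
  exists su sv sX sy sz c a b : L,
    ([/\ su != 0, sv != 0, sX != 0, sy != 0 & sz != 0] /\ c != 0) /\
    forall u v X y w,
      D1*(sy*y)^+3 + C*((sy*y)*(su*u)*(sv*v)) + D2*((sy*y)*(sz*w)*(sX*X))
      + B1*((su*u)^+2*(sX*X)) + B2*((su*u)*(sz*w)^+2) + B3*((sz*w)*(sv*v)^+2)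
      + B4*((sX*X)^+2*(sv*v)) = c * fabE a b u v X y w.
Proof.
move=> h1 h2 h3 h4 hC.
pose K := 32%:R * B3^+2 * B1^+8 / (B2 * B4^+4).
have n32 : (32%:R : L) != 0 by rewrite (_ : 32 = 2 * 2 * 2 * 2 * 2)%N // !natrM !mulf_neq0.
have n4 : (4%:R : L) != 0 by rewrite (_ : 4 = 2 * 2)%N // !natrM !mulf_neq0.
have n16 : (16%:R : L) != 0 by rewrite (_ : 16 = 4 * 4)%N // !natrM !mulf_neq0.
have K0 : K != 0.
  apply: mulf_neq0; last by rewrite invr_eq0 mulf_neq0 ?expf_neq0.
  by rewrite !mulf_neq0 ?expf_neq0.
have [c hc] := root_pow5 K.
have c0 : c != 0.
  by apply/eqP => c0; move: K0; rewrite -hc c0 exprS mul0r eqxx.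
pose su : L := 1.
pose sX := c / B1.
pose sv := 2%:R * B1^+2 / (B4 * c).
pose sz := c^+3 * B4^+2 / (4%:R * B3 * B1^+4).
pose sy := c^+2 * B4 / (C * B1^+2).
exists su, sv, sX, sy, sz, c, (D1 * sy^+3 / c), (D2 * sy * sz * sX / c); split.
  by split; first split; rewrite ?/su ?/sv ?/sX ?/sy ?/sz; nz.
have k1 : B1 * su^+2 * sX = c by rewrite /su /sX; fld.
have k2 : B2 * su * sz^+2 = 2%:R * c.
  rewrite /su /sz.
  have -> : B2 * 1 * (c ^+ 3 * B4 ^+ 2 / (4%:R * B3 * B1 ^+ 4)) ^+ 2 =
     B2 * c * c^+5 * B4^+4 / (4%:R * 4%:R * B3^+2 * B1^+8).
    by fld.
  rewrite hc /K.
  have -> : (32%:R : L) = 2%:R * 4%:R * 4%:R by rewrite -!natrM.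
  by fld.
have k3 : B3 * sz * sv^+2 = c by rewrite /sz /sv; fld.
have k4 : B4 * sX^+2 * sv = 2%:R * c by rewrite /sX /sv; fld.
have k5 : C * sy * su * sv = 2%:R * c by rewrite /sy /su /sv; fld.
set a0 := D1 * sy^+3 / c; set b0 := D2 * sy * sz * sX / c.
have ka : D1 * sy^+3 = c * a0 by rewrite /a0; fld.
have kb : D2 * sy * sz * sX = c * b0 by rewrite /b0; fld.
move=> u v X y w.
have -> : D1*(sy*y)^+3 + C*((sy*y)*(su*u)*(sv*v)) + D2*((sy*y)*(sz*w)*(sX*X))
      + B1*((su*u)^+2*(sX*X)) + B2*((su*u)*(sz*w)^+2) + B3*((sz*w)*(sv*v)^+2)
      + B4*((sX*X)^+2*(sv*v)) =
   (D1 * sy^+3) * y^+3 + (C * sy * su * sv) * (y*u*v) + (D2 * sy * sz * sX) * (X*y*w)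
   + (B1 * su^+2 * sX) * (X*u^+2) + (B2 * su * sz^+2) * (w^+2*u) + (B3 * sz * sv^+2) * (w*v^+2)
   + (B4 * sX^+2 * sv) * (X^+2*v) by ring.
rewrite k1 k2 k3 k4 k5 ka kb /fabE; ring.
Qed.
End Scal.

Lemma ordcase (P : 'I_5 -> Prop) : P 0 -> P 1 -> P 2 -> P 3 -> P 4 -> forall i, P i.
Proof. by move=> p0 p1 p2 p3 p4 i; case: (ord5 i) => [->|[->|[->|[->|->]]]]. Qed.

Lemma normal_form (L : closedFieldType) (A1 A2 A3 A4 A5 A6 A7 : L) : (2%:R : L) != 0 ->
  smooth_hypersurface (Fa A1 A2 A3 A4 A5 A6 A7) -> (A2 != 0 \/ A3 != 0) ->
  exists (M : 'M[L]_5) (a b c : L), M \in unitmx /\ c != 0 /\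
    forall x, (Fa A1 A2 A3 A4 A5 A6 A7).@[lin M x] = c * (Fab a b).@[x].
Proof.
move=> n2 sm h23.
have sing : forall u v X y w : L, (Fa A1 A2 A3 A4 A5 A6 A7).@[pt u v X y w] = 0 ->
    (forall i, ((Fa A1 A2 A3 A4 A5 A6 A7)^`M(i)).@[pt u v X y w] = 0) ->
    [/\ u = 0, v = 0, X = 0, y = 0 & w = 0].
  move=> u v X y w F0 dF.
  by split; [exact: (sm _ F0 dF 0) | exact: (sm _ F0 dF 1) | exact: (sm _ F0 dF 2)
    | exact: (sm _ F0 dF 3) | exact: (sm _ F0 dF 4)].
have h4 : A4 != 0.
  apply/eqP => a0.
  have F0 : (Fa A1 A2 A3 A4 A5 A6 A7).@[pt 0 1 0 0 0] = 0 by rewrite Fa_v !ptE ?a0; ring.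
  have dF : forall i, ((Fa A1 A2 A3 A4 A5 A6 A7)^`M(i)).@[pt 0 1 0 0 0] = 0.
    by apply: ordcase; rewrite ?(Fa_d0, Fa_d1, Fa_d2, Fa_d3, Fa_d4) !ptE ?a0; ring.
  case: (sing _ _ _ _ _ F0 dF) => _ h _ _ _; by move/eqP: h; rewrite oner_eq0.
have h5 : A5 != 0.
  apply/eqP => a0.
  have F0 : (Fa A1 A2 A3 A4 A5 A6 A7).@[pt 0 0 1 0 0] = 0 by rewrite Fa_v !ptE ?a0; ring.
  have dF : forall i, ((Fa A1 A2 A3 A4 A5 A6 A7)^`M(i)).@[pt 0 0 1 0 0] = 0.
    by apply: ordcase; rewrite ?(Fa_d0, Fa_d1, Fa_d2, Fa_d3, Fa_d4) !ptE ?a0; ring.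
  case: (sing _ _ _ _ _ F0 dF) => _ _ h _ _; by move/eqP: h; rewrite oner_eq0.
have h7 : A7 != 0.
  apply/eqP => a0.
  have F0 : (Fa A1 A2 A3 A4 A5 A6 A7).@[pt 0 0 0 1 0] = 0 by rewrite Fa_v !ptE ?a0; ring.
  have dF : forall i, ((Fa A1 A2 A3 A4 A5 A6 A7)^`M(i)).@[pt 0 0 0 1 0] = 0.
    by apply: ordcase; rewrite ?(Fa_d0, Fa_d1, Fa_d2, Fa_d3, Fa_d4) !ptE ?a0; ring.
  case: (sing _ _ _ _ _ F0 dF) => _ _ _ h _; by move/eqP: h; rewrite oner_eq0.
have h6 : A6 != 0.
  apply/eqP => a0.
  have F0 : (Fa A1 A2 A3 A4 A5 A6 A7).@[pt 0 0 0 0 1] = 0 by rewrite Fa_v !ptE ?a0; ring.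
  have dF : forall i, ((Fa A1 A2 A3 A4 A5 A6 A7)^`M(i)).@[pt 0 0 0 0 1] = 0.
    by apply: ordcase; rewrite ?(Fa_d0, Fa_d1, Fa_d2, Fa_d3, Fa_d4) !ptE ?a0; ring.
  case: (sing _ _ _ _ _ F0 dF) => _ _ _ _ h; by move/eqP: h; rewrite oner_eq0.
case: h23 => [h2|h3].
- have [su [sv [sX [sy [sz [c [a [b [[[n1 n2' n3 n4 n5] c0] H]]]]]]]]] :=
    scal n2 A1 A3 h4 h5 h6 h7 h2.
  pose sg (i : 'I_5) : 'I_5 := nth 0 [:: 3; 0; 4; 2; 1] i.
  pose s (i : 'I_5) : L := nth 0 [:: sy; su; sz; sX; sv] i.
  have [Mu Ml] := @perm_scale_mx L sg s
    ltac:(by apply: ordcase; apply: ordcase) ltac:(by apply: ordcase).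
  exists (\matrix_(i, j) (s i *+ (j == sg i))), a, b, c; split => //; split => // x.
  rewrite Fa_v !Ml Fab_v /s /sg /=.
  have := H (x 0) (x 1) (x 2) (x 3) (x 4); rewrite /fabE => <-; ring.
- have [su [sv [sX [sy [sz [c [a [b [[[n1 n2' n3 n4 n5] c0] H]]]]]]]]] :=
    scal n2 A1 A2 h5 h6 h7 h4 h3.
  pose sg (i : 'I_5) : 'I_5 := nth 0 [:: 3; 2; 0; 1; 4] i.
  pose s (i : 'I_5) : L := nth 0 [:: sy; sX; su; sv; sz] i.
  have [Mu Ml] := @perm_scale_mx L sg s
    ltac:(by apply: ordcase; apply: ordcase) ltac:(by apply: ordcase).
  exists (\matrix_(i, j) (s i *+ (j == sg i))), a, b, c; split => //; split => // x.
  rewrite Fa_v !Ml Fab_v /s /sg /=.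
  have := H (x 0) (x 1) (x 2) (x 3) (x 4); rewrite /fabE => <-; ring.
Qed.

Unset Implicit Arguments. Set Strict Implicit.

Theorem lemma1p2 (k : fieldType) (zeta : k)
    (L : closedFieldType) (f : {rmorphism k -> L}) :
  [pchar k] =i pred0 ->
  5.-primitive_root zeta ->
  (* normal form *)
  (forall a1 a2 a3 a4 a5 a6 a7 : k,
     smooth_hypersurface (map_mpoly f (Fa a1 a2 a3 a4 a5 a6 a7)) ->
     (a2 != 0 \/ a3 != 0) ->
     exists (M : 'M[L]_5) (a b c : L),
       M \in unitmx /\ c != 0 /\
       forall x : 'I_5 -> L,
         (map_mpoly f (Fa a1 a2 a3 a4 a5 a6 a7)).@[lin M x]
           = c * (Fab a b).@[x])
  /\
  (* smoothness criterion *)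
  (forall a b : L, smooth_hypersurface (Fab a b) <-> Dab a b != 0)
  /\
  (* the dihedral group of automorphisms *)
  (forall a b : L,
     let A := alphaM (f zeta) in
     let I := iotaM L in
     [/\ is_aut_of (Fab a b) A /\ is_aut_of (Fab a b) I,
         (pequiv (A ^+ 5) 1 /\ (forall m : nat, (0 < m < 5)%N -> ~ pequiv (A ^+ m) 1)),
         (pequiv (I ^+ 2) 1 /\ ~ pequiv I 1),
         pequiv (I * A * I) (A ^+ 4)
       & (forall (i1 i2 j1 j2 : nat), (i1 < 5)%N -> (i2 < 5)%N -> (j1 < 2)%N -> (j2 < 2)%N ->
           pequiv (A ^+ i1 * I ^+ j1) (A ^+ i2 * I ^+ j2) -> i1 = i2 /\ j1 = j2)]).
Proof.
move=> ch prim.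
have nL : forall n, (0 < n)%N -> (n%:R : L) != 0.
  move=> n n0; rewrite -(rmorph_nat f) fmorph_eq0 ((pcharf0P k).1 ch n).
  by rewrite -lt0n.
split.
  move=> a1 a2 a3 a4 a5 a6 a7; rewrite map_Fa => sm h23.
  apply: normal_form (nL 2%N isT) sm _.
  by case: h23 => h; [left|right]; rewrite fmorph_eq0.
split.
  by move=> a b; apply: smooth_iff; apply: nL.
move=> a b; apply: aut_all.
by rewrite fmorph_primitive_root.
Qed.
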